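(* Let $\mathcal X$ be a finite set, let $M:=\log|\mathcal X|$, let $\mathcal C$ be any set of probability measures on $(\mathcal X^\infty,\mathcal F)$, and let $\rho$ be any probability measure on $(\mathcal X^\infty,\mathcal F)$. Then there exists a discrete Bayesian predictor $\nu$, that is, a probability measure of the form $\nu=\sum_{k\in\mathbb N} w_k\mu_k$ with $\mu_k\in\mathcal C$ and $w_k\in[0,1]$, such that for every $\mu\in\mathcal C$ and every time step $n$, $$L_n(\mu,\nu)-L_n(\mu,\rho)\le 8\log n+O(\log\log n),$$ where the $O(\log\log n)$ term does not depend on $\mu$ or on $\mathcal C$ and $\rho$; its constants are explicit, depend on the alphabet only linearly through $M$ (a term of order $M\log\log n$), and are otherwise universal constants.
   Context: $\mathcal X$ is a finite alphabet; $x_{1..n}$ denotes $x_1,\dots,x_n$; $\mathcal F$ is the Borel sigma-field on $\mathcal X^\infty$. For a measure $\mu$ on $\mathcal X^\infty$, $\mu(x_{1..n})$ denotes the probability that the first $n$ symbols equal $x_{1..n}$. Logarithms are base 2. For two probability measures $\mu,\rho$ on $(\mathcal X^\infty,\mathcal F)$, the expected cumulative Kullback–Leibler divergence (log loss) up to time $n$ is $$L_n(\mu,\rho):=\mathbb E_\mu\sum_{t=1}^{n}\sum_{a\in\mathcal X}\mu(x_t=a\mid x_{1..t-1})\log\frac{\mu(x_t=a\mid x_{1..t-1})}{\rho(x_t=a\mid x_{1..t-1})}=\sum_{x_{1..n}\in\mathcal X^n}\mu(x_{1..n})\log\frac{\mu(x_{1..n})}{\rho(x_{1..n})},$$ where $\mu$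 is interpreted as the measure generating the data and $\rho$ as the predictor. *)

(* Defs.v *)
From HB Require Import structures.
From mathcomp Require Import all_boot all_order all_algebra.
From mathcomp Require Import all_classical all_reals all_analysis.
Import Order.TTheory GRing.Theory Num.Theory.
Local Open Scope classical_set_scope.
Local Open Scope ring_scope.

(* Infinite sequences x_1 x_2 ... over a (nonempty) finite alphabet X,
   indexed from 0.  x0 only serves to give the type a canonical point, as
   required by MathComp-Analysis for sigma-algebra types. *)
Definition seqs (X : finType) (x0 : X) := nat -> X.
HB.instance Definition _ (X : finType) (x0 : X) := gen_eqMixin (seqs X x0).
HB.instance Definition _ (X : finType) (x0 : X) := gen_choiceMixin (seqs X x0).
HB.instance Definition _ (X : finType) (x0 : X) :=
  isPointed.Build (seqs X x0) (fun _ => x0).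

Definition cyl (X : finType) (x0 : X) (n : nat) (x : n.-tuple X) : set (seqs X x0) :=
  [set w | forall i : 'I_n, w i = tnth x i].

Definition cylinders (X : finType) (x0 : X) : set (set (seqs X x0)) :=
  [set A | exists n (x : n.-tuple X), A = cyl X x0 n x].

(* (X^infty, F): F is the sigma-field generated by the cylinders, which is
   the Borel sigma-field of the product of discrete topologies. *)
Definition Xinf (X : finType) (x0 : X) := g_sigma_algebraType (cylinders X x0).

Definition log2 (R : realType) (x : R) : R := ln x / ln 2.

(* p log (p/q), with 0 log (0/q) = 0 and p log (p/0) = +oo for p > 0 *)
Definition kl_term (R : realType) (p q : R) : \bar R :=
  if p == 0 then 0%E else if q == 0 then +oo%E else (p * log2 R (p / q))%:E.

Definition cylp (R : realType) (X : finType) (x0 : X)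
    (mu : probability (Xinf X x0) R) (n : nat) (x : n.-tuple X) : R :=
  fine (mu (cyl X x0 n x : set (Xinf X x0))).

Definition Ln (R : realType) (X : finType) (x0 : X)
    (mu rho : probability (Xinf X x0) R) (n : nat) : \bar R :=
  (\sum_(x : n.-tuple X) kl_term R (cylp R X x0 mu n x) (cylp R X x0 rho n x))%E.

(* Main.v *)
Require Import Defs.
From HB Require Import structures.
From mathcomp Require Import all_boot all_order all_algebra.
From mathcomp Require Import all_classical all_reals all_analysis.
From mathcomp Require Import ring lra zify.
Import Order.TTheory GRing.Theory Num.Theory.
Local Open Scope classical_set_scope.
Local Open Scope ring_scope.
Section Cyl.
Variables (R : realType) (X : finType) (x0 : X).
Local Notation T := (Xinf X x0).
Local Notation P := (probability T R).

Lemma cyl_meas n (x : n.-tuple X) : measurable (cyl X x0 n x : set T).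
Proof. by apply: sub_sigma_algebra; exists n, x. Qed.

Lemma cylpE (mu : P) n x : mu (cyl X x0 n x : set T) = (cylp R X x0 mu n x)%:E.
Proof.
rewrite /cylp fineK // ge0_fin_numE ?measure_ge0 //.
by apply: (@le_lt_trans _ _ 1%E); [exact: probability_le1 (cyl_meas n x) | exact: ltey].
Qed.

Lemma cylp_ge0 (mu : P) n x : 0 <= cylp R X x0 mu n x.
Proof. by rewrite -lee_fin -cylpE measure_ge0. Qed.

Lemma cylp_le1 (mu : P) n x : cylp R X x0 mu n x <= 1.
Proof. by rewrite -lee_fin -cylpE probability_le1 //; exact: cyl_meas. Qed.

Lemma cyl_disj n (x y : n.-tuple X) : (cyl X x0 n x `&` cyl X x0 n y) !=set0 -> x = y.
Proof.
case=> w [/= hx hy]; apply: eq_from_tnth => i.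
by rewrite -hx -hy.
Qed.

Lemma cylp_sum (mu : P) n : \sum_(x : n.-tuple X) cylp R X x0 mu n x <= 1.
Proof.
rewrite -lee_fin -sumEFin.
under eq_bigr do rewrite -cylpE.
rewrite (_ : \sum_(x : n.-tuple X) _ = \sum_(x in predT) mu (cyl X x0 n x : set T))%E; last by apply: eq_bigl.
rewrite big_enum_val /=.
rewrite -measure_bigsetU_ord.
- by apply: probability_le1; apply: bigsetU_measurable => i _; exact: cyl_meas.
- by move=> i; exact: cyl_meas.
- move=> i j _ _ /cyl_disj; exact: enum_val_inj.
Qed.
End Cyl.
Arguments cyl_meas {X x0}.
Arguments cylpE {R X x0}.
Arguments cylp_ge0 {R X x0}.
Arguments cylp_le1 {R X x0}.
Arguments cylp_sum {R X x0}.

Section Real.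
Variable R : realType.

Lemma ln_le_sub1 (z : R) : 0 < z -> ln z <= z - 1.
Proof.
move=> z0; have := @le_ln1Dx R (z - 1).
rewrite (_ : 1 + (z - 1) = z); last by ring.
apply; lra.
Qed.

Lemma ln_ge_1subV (z : R) : 0 < z -> 1 - z^-1 <= ln z.
Proof.
move=> z0; have := @ln_le_sub1 (z^-1); rewrite invr_gt0 => /(_ z0).
rewrite lnV ?posrE //; lra.
Qed.

Lemma ln_quad (u : R) : -(1/2) <= u -> u - 2 * u ^+ 2 <= ln (1 + u).
Proof.
move=> hu; have hp : 0 < 1 + u by lra.
apply: le_trans; last exact: (ln_ge_1subV _ hp).
have -> : 1 - (1 + u)^-1 = u / (1 + u) by field; rewrite lt0r_neq0.
rewrite ler_pdivlMr //.
have : 0 <= u ^+ 2 * (1 + 2 * u) by apply: mulr_ge0; [exact: sqr_ge0 | lra].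
nra.
Qed.

Lemma ln2_ge : 1/2 <= ln (2 : R).
Proof.
have := @ln_ge_1subV 2 (ltac:(lra)).
have -> : (1 - (2 : R)^-1) = 1/2 by field.
by [].
Qed.

Lemma sum_le_sub (I : finType) (Pp Q : pred I) (F G : I -> R) :
  (forall i, Pp i -> Q i) -> (forall i, Pp i -> F i <= G i) ->
  (forall i, Q i -> 0 <= G i) -> \sum_(i | Pp i) F i <= \sum_(i | Q i) G i.
Proof.
move=> PQ FG G0; rewrite big_mkcond [leRHS]big_mkcond; apply: ler_sum => i _.
case: ifP => Pi; first by rewrite (PQ _ Pi); exact: FG.
by case: ifP => // Qi; exact: G0.
Qed.
End Real.
Arguments ln_le_sub1 {R}.
Arguments ln_ge_1subV {R}.
Arguments ln_quad {R}.
Arguments ln2_ge {R}.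
Arguments sum_le_sub {R I}.

Section Mix.
Variables (R : realType) (X : finType) (x0 : X).
Local Notation T := (Xinf X x0).
Local Notation P := (probability T R).

Record mixt := Mixt { mL : nat; mv : nat -> R; mm : nat -> P }.

Variable C : set P.

Definition valid (d : mixt) := (forall j, C (mm d j)) /\ (forall j, 0 <= mv d j) /\
  \sum_(j < mL d) mv d j = 1.
Definition vec n (d : mixt) (x : n.-tuple X) :=
  \sum_(j < mL d) mv d j * cylp R X x0 (mm d j) n x.

Lemma vec_ge0 d n x : valid d -> 0 <= vec n d x.
Proof.
case=> _ [h0 _]; apply: sumr_ge0 => j _; apply: mulr_ge0 => //; exact: cylp_ge0.
Qed.

Lemma vec_le1 d n x : valid d -> vec n d x <= 1.
Proof.
case=> _ [h0 h1]; rewrite -h1; apply: ler_sum => j _.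
rewrite -[leRHS]mulr1; apply: ler_wpM2l => //; exact: cylp_le1.
Qed.

Definition single (mu : P) := Mixt 1 (fun _ => 1) (fun _ => mu).

Lemma single_valid mu : C mu -> valid (single mu).
Proof. by move=> Cmu; split; [|split] => //=; rewrite big_ord1. Qed.

Lemma vec_single mu n x : vec n (single mu) x = cylp R X x0 mu n x.
Proof. by rewrite /vec big_ord1 mul1r. Qed.

Definition mix (t : R) (d1 d2 : mixt) := Mixt (mL d1 + mL d2)
  (fun j => if (j < mL d1)%N then (1 - t) * mv d1 j else t * mv d2 (j - mL d1))
  (fun j => if (j < mL d1)%N then mm d1 j else mm d2 (j - mL d1)).

Lemma mix_valid t d1 d2 : 0 <= t <= 1 -> valid d1 -> valid d2 -> valid (mix t d1 d2).
Proof.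
move=> /andP[t0 t1] [c1 [p1 s1]] [c2 [p2 s2]]; split; [|split].
- by move=> j /=; case: ifP.
- by move=> j /=; case: ifP => _; apply: mulr_ge0 => //; lra.
- rewrite /= big_split_ord /=.
  under eq_bigr => i _ do rewrite ltn_ord.
  under [X in _ + X]eq_bigr => i _ do rewrite ltnNge leq_addr /= addKn.
  by rewrite -!mulr_sumr s1 s2; ring.
Qed.

Lemma vec_mix t d1 d2 n x :
  vec n (mix t d1 d2) x = (1 - t) * vec n d1 x + t * vec n d2 x.
Proof.
rewrite /vec /= big_split_ord /=.
under eq_bigr => i _ do rewrite ltn_ord.
under [X in _ + X]eq_bigr => i _ do rewrite ltnNge leq_addr /= addKn.
by rewrite !mulr_sumr; congr (_ + _); apply: eq_bigr => i _; rewrite mulrA.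
Qed.
End Mix.
Arguments vec {R X x0}.
Arguments valid {R X x0}.
Arguments single {R X x0}.
Arguments mix {R X x0}.
Arguments mL {R X x0}.
Arguments mv {R X x0}.
Arguments mm {R X x0}.
Arguments vec_ge0 {R X x0 C}.
Arguments vec_le1 {R X x0 C}.
Arguments single_valid {R X x0 C}.
Arguments mix_valid {R X x0 C}.
Arguments vec_single {R X x0}.
Arguments vec_mix {R X x0}.

Section Stage.
Variables (R : realType) (X : finType) (x0 : X).
Local Notation T := (Xinf X x0).
Local Notation P := (probability T R).
Variables (C : set P) (rho mu0 : P) (Cmu0 : C mu0) (n : nat).
Local Notation cp mu x := (cylp R X x0 mu n x).
Local Notation vec := (vec n).
Local Notation valid := (valid C).

Definition pickm (x : n.-tuple X) : P :=
  match pselect (exists mu, C mu /\ 0 < cp mu x) with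
  | left h => proj1_sig (cid h)
  | right _ => mu0 end.

Lemma pickm_C x : C (pickm x).
Proof. by rewrite /pickm; case: pselect => // h; case: (cid h) => /= mu []. Qed.

Lemma pickm_pos x mu : C mu -> 0 < cp mu x -> 0 < cp (pickm x) x.
Proof.
move=> Cmu hmu; rewrite /pickm; case: pselect => [h|[]]; last by exists mu.
by case: (cid h) => /= mu' [].
Qed.

Definition S x := (0 < cp rho x) && (0 < cp (pickm x) x).
Definition Phi (d : mixt R X x0) := \sum_(x | S x) cp rho x * ln (vec d x).
Definition good (d : mixt R X x0) := valid d /\ forall x, S x -> 0 < vec d x.

Lemma good_exists : exists d, good d.
Proof.
suff : forall s : seq (n.-tuple X), exists d, valid d /\
    forall x, x \in s -> S x -> 0 < vec d x.
  case/(_ (enum [set: n.-tuple X])) => d [vd hd]; exists d; split => // x; apply: hd.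
  by rewrite mem_enum in_setT.
elim=> [|y s [d [vd hd]]].
  by exists (single mu0); split => //; exact: single_valid.
exists (mix (1/2) d (single (pickm y))); split.
  by apply: mix_valid => //; [lra | exact: single_valid (pickm_C y)].
move=> x; rewrite inE => hx Sx; rewrite vec_mix vec_single.
have h1 := vec_ge0 d n x vd; have h2 := cylp_ge0 (pickm y) n x.
case/orP: hx => [/eqP Exy|xs].
  by subst x; move: Sx; rewrite /S => /andP[_ hy]; lra.
by have := hd x xs Sx; lra.
Qed.

Lemma Phi_le0 d : good d -> Phi d <= 0.
Proof.
case=> vd hd; apply: sumr_le0 => x Sx; apply: mulr_ge0_le0; first exact: cylp_ge0.
exact/ln_le0/(vec_le1 _ _ _ vd).
Qed.

Definition Aset := [set Phi d | d in good].

Lemma hasA : has_sup Aset.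
Proof.
split; first by have [d gd] := good_exists; exists (Phi d), d.
by exists 0 => _ [d gd <-]; exact: Phi_le0.
Qed.


Lemma mix_good (d : mixt R X x0) mu s : good d -> C mu -> 0 <= s <= 1/2 ->
  good (mix s d (single mu)).
Proof.
move=> [vd hd] Cmu /andP[s0 s1]; split.
  by apply: mix_valid => //; [lra | exact: single_valid].
move=> x Sx; rewrite vec_mix vec_single.
have := hd x Sx; have := cylp_ge0 mu n x; nra.
Qed.

Lemma Phi_mix (d : mixt R X x0) mu s : good d -> C mu -> 0 <= s <= 1/2 ->
  Phi (mix s d (single mu)) - Phi d =
  \sum_(x | S x) cp rho x * ln (1 - s + s * (cp mu x / vec d x)).
Proof.
move=> gd Cmu /andP[s0 s1]; rewrite /Phi -sumrB; apply: eq_bigr => x Sx.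
rewrite vec_mix vec_single -mulrBr; congr (_ * _).
have p0 := gd.2 x Sx.
have r0 : 0 <= cp mu x / vec d x by apply: divr_ge0; [exact: cylp_ge0 | exact: ltW].
have q0 : 0 < 1 - s + s * (cp mu x / vec d x) by nra.
rewrite (_ : (1 - s) * vec d x + s * cp mu x =
   vec d x * (1 - s + s * (cp mu x / vec d x))); last by field; exact: lt0r_neq0.
by rewrite lnM ?posrE //; ring.
Qed.


Lemma stage_main : exists d : mixt R X x0, valid d /\ forall mu, C mu ->
  (forall x, 0 < cp mu x -> 0 < cp rho x -> 0 < vec d x) /\
  \sum_(x | (0 < cp mu x) && (0 < cp rho x)) cp mu x * ln (cp rho x / vec d x) <= 2.
Proof.
pose K := \sum_(x | S x) ((2 * expR (2 / cp rho x)) ^+ 2 + 1).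
have K0 : 0 <= K.
  by apply: sumr_ge0 => x _; apply: addr_ge0 => //; exact: sqr_ge0.
pose t := 1 / (4 * (K + 1)).
have t0 : 0 < t by rewrite /t; apply: divr_gt0 => //; lra.
have tK : t * (4 * (K + 1)) = 1.
  by rewrite /t; field; apply/lt0r_neq0; lra.
have t4 : t <= 1/4 by nra.
have t2 : 0 < t / 2 by lra.
have [e [d gd <-] He] := sup_adherent t2 hasA.
exists d; split; first exact: gd.1.
move=> mu Cmu.
have pos : forall x, 0 < cp mu x -> 0 < cp rho x -> S x.
  by move=> x hm hr; rewrite /S hr /=; exact: pickm_pos Cmu hm.
split; first by move=> x hm hr; exact: gd.2 x (pos x hm hr).
have key : forall s, 0 <= s <= 1/2 ->
    \sum_(x | S x) cp rho x * ln (1 - s + s * (cp mu x / vec d x)) < t / 2.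
  move=> s hs; rewrite -Phi_mix //.
  have : Phi (mix s d (single mu)) <= sup Aset.
    apply: sup_upper_bound; first exact: hasA.
    by exists (mix s d (single mu)) => //; exact: mix_good.
  lra.
have Sa1 : \sum_(x | S x) cp rho x <= 1.
  apply: le_trans (cylp_sum rho n); apply: sum_le_sub => // x _.
  exact: cylp_ge0.
have a0 : forall x, 0 <= cp rho x by move=> x; exact: cylp_ge0.
have a1 : forall x, cp rho x <= 1 by move=> x; exact: cylp_le1.
have p0 : forall x, S x -> 0 < vec d x by move=> x Sx; exact: gd.2 x Sx.
have r0 : forall x, S x -> 0 <= cp mu x / vec d x.
  by move=> x Sx; apply: divr_ge0; [exact: cylp_ge0 | exact: ltW (p0 x Sx)].
have rb : forall x, S x -> cp mu x / vec d x <= 2 * expR (2 / cp rho x).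
  move=> x Sx.
  have := key (1/2) ltac:(lra).
  rewrite (bigD1 x) //=.
  have hrest : - 1 <= \sum_(y | S y && (y != x))
      cp rho y * ln (1 - 1/2 + 1/2 * (cp mu y / vec d y)).
    apply: (@le_trans _ _ (- \sum_(y | S y && (y != x)) cp rho y)).
      rewrite lerN2; apply: le_trans Sa1; apply: sum_le_sub => //.
      by move=> y /andP[].
    rewrite -sumrN; apply: ler_sum => y /andP[Sy _].
    have ry := r0 y Sy.
    have qy : 0 < 1 - 1/2 + 1/2 * (cp mu y / vec d y) by lra.
    have := ln_ge_1subV _ qy.
    have : (1 - 1/2 + 1/2 * (cp mu y / vec d y))^-1 <= 2.
      rewrite invf_ple ?posrE //; lra.
    have := a0 y; nra.
  move=> hsum.
  have ax0 : 0 < cp rho x by move: Sx => /andP[].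
  have qx : 0 < 1 - 1/2 + 1/2 * (cp mu x / vec d x) by have := r0 x Sx; lra.
  have hl : ln (1 - 1/2 + 1/2 * (cp mu x / vec d x)) < 2 / cp rho x.
    rewrite ltr_pdivlMr // mulrC; lra.
  rewrite -ltr_expR lnK ?posrE // in hl; lra.
have hSq : \sum_(x | S x) cp rho x * (cp mu x / vec d x - 1) ^+ 2 <= K.
  apply: ler_sum => x Sx.
  have ry := r0 x Sx; have rbx := rb x Sx.
  have E0 : 0 <= 2 * expR (2 / cp rho x) by have := expR_gt0 (2 / cp rho x); lra.
  have h1 : cp rho x * (cp mu x / vec d x - 1) ^+ 2 <= (cp mu x / vec d x - 1) ^+ 2.
    by rewrite -[leRHS]mul1r; apply: ler_wpM2r; [exact: sqr_ge0 | exact: a1].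
  have h2 : (cp mu x / vec d x) ^+ 2 <= (2 * expR (2 / cp rho x)) ^+ 2.
    by rewrite ler_sqr ?nnegrE.
  apply: (le_trans h1); move: h2; rewrite !expr2; nra.
have ht := key t ltac:(lra).
pose Sar := \sum_(x | S x) cp rho x * (cp mu x / vec d x).
pose Sa := \sum_(x | S x) cp rho x.
pose Sq := \sum_(x | S x) cp rho x * (cp mu x / vec d x - 1) ^+ 2.
have hlow : t * Sar - t * Sa - 2 * t ^+ 2 * Sq <=
    \sum_(x | S x) cp rho x * ln (1 - t + t * (cp mu x / vec d x)).
  rewrite /Sar /Sa /Sq !mulr_sumr -!sumrB; apply: ler_sum => x Sx.
  have := ln_quad (t * (cp mu x / vec d x - 1)).
  rewrite (_ : 1 + t * (cp mu x / vec d x - 1) = 1 - t + t * (cp mu x / vec d x)); last by ring.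
  have ry := r0 x Sx.
  move=> /(_ ltac:(nra)) hq.
  have := a0 x.
  move: hq; set L := ln _; set r := cp mu x / vec d x; set a := cp rho x => hq ha.
  have : a * (t * (r - 1) - 2 * (t * (r - 1)) ^+ 2) <= a * L by apply: ler_wpM2l.
  move=> h; apply: le_trans h; rewrite !expr2; lra.
have hfin : Sar <= 2.
  have SqK : Sq <= K := hSq.
  have Sa1' : Sa <= 1 := Sa1.
  have : t * Sar < t * 2.
    have h1 : t * Sa <= t by rewrite -[leRHS]mulr1 ler_wpM2l // ltW.
    have h3 : t ^+ 2 * Sq <= t ^+ 2 * K by apply: ler_wpM2l => //; exact: sqr_ge0.
    have h2 : 2 * t ^+ 2 * Sq <= t / 2.
      rewrite -mulrA; move: h3; rewrite !expr2; nra.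
    move: hlow ht h1 h2; rewrite -/Sa -/Sar -/Sq; lra.
  by rewrite ltr_pM2l // => /ltW.
apply: le_trans hfin; apply: sum_le_sub.
- by move=> x /andP[hm hr]; exact: pos x hm hr.
- move=> x /andP[hm hr].
  have Sx := pos x hm hr.
  have px := p0 x Sx.
  have hl := ln_le_sub1 _ (divr_gt0 hr px).
  rewrite [X in _ <= X]mulrCA.
  have : cp mu x * ln (cp rho x / vec d x) <= cp mu x * (cp rho x / vec d x - 1).
    by apply: ler_wpM2l => //; exact: ltW.
  move=> h; apply: le_trans h _.
  have := ltW hm; nra.
- by move=> x Sx; apply: mulr_ge0; [exact: a0 | exact: r0].
Qed.

End Stage.
Section Flat.
Variables (R : realType) (X : finType) (x0 : X).
Local Notation T := (Xinf X x0).
Local Notation P := (probability T R).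
Variables (C : set P) (D : nat -> mixt R X x0) (vD : forall n, valid C (D n)).

Lemma nneseries_ub (u : nat -> \bar R) (c : \bar R) : (forall i, (0 <= u i)%E) ->
  (forall K, (\sum_(0 <= k < K) u k <= c)%E) -> (\sum_(0 <= k <oo) u k <= c)%E.
Proof.
move=> u0 hK; apply: lime_le; first by apply: is_cvg_nneseries => i _ _; exact: u0.
exact: nearW.
Qed.

Definition Lb n := (mL (D n)).+1.
Fixpoint B n := if n is m.+1 then (B m + Lb m)%N else 0%N.

Lemma B_ge n : (n <= B n)%N.
Proof. by elim: n => //= n ih; rewrite /Lb addnS ltnS (leq_trans ih) // leq_addr. Qed.

Lemma B_mono m k : (m <= k)%N -> (B m <= B k)%N.
Proof.
move=> /subnK <-; elim: (k - m)%N => //= i ih.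
by rewrite ?addSn /= (leq_trans ih) // leq_addr.
Qed.

Lemma B_lt k : (k < B k.+1)%N.
Proof. exact: B_ge k.+1. Qed.

Definition stage k := ex_minn (ex_intro (fun n => (k < B n.+1)%N) k (B_lt k)).

Lemma stage_spec k : (B (stage k) <= k < B (stage k).+1)%N.
Proof.
rewrite /stage; case: ex_minnP => m hm hmin; rewrite hm andbT.
case: m hm hmin => // m hm hmin; rewrite leqNgt; apply/negP => hk.
by have := hmin m hk; rewrite ltnn.
Qed.

Lemma stage_eq n j : (j < Lb n)%N -> stage (B n + j) = n.
Proof.
move=> hj; have /andP[h1 h2] := stage_spec (B n + j).
case: (ltngtP (stage (B n + j)) n) => // hc.
- have := B_mono _ _ hc; move: h2; set s := stage _; lia.
- have := B_mono _ _ hc; rewrite [B n.+1]/=; move: h1 hj; set s := stage _; lia.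
Qed.

Definition W n : R := 1 / ((n + 1)%:R * (n + 2)%:R).
Definition vv n j := if (j < mL (D n))%N then mv (D n) j else 0.
Definition wf k := W (stage k) * vv (stage k) (k - B (stage k)).
Definition musf k := mm (D (stage k)) (k - B (stage k)).

Lemma W_gt0 n : 0 < W n.
Proof. by rewrite /W divr_gt0 // mulr_gt0 // ltr0n addn_gt0 orbT. Qed.

Lemma vv_ge0 n j : 0 <= vv n j.
Proof. by rewrite /vv; case: ifP => // _; case: (vD n) => _ []. Qed.

Lemma wf_ge0 k : 0 <= wf k.
Proof. by rewrite /wf mulr_ge0 // ?vv_ge0 // ltW // W_gt0. Qed.

Lemma wf_block n j : (j < Lb n)%N -> wf (B n + j) = W n * vv n j.
Proof. by move=> hj; rewrite /wf stage_eq // addKn. Qed.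

Lemma musf_block n j : (j < Lb n)%N -> musf (B n + j) = mm (D n) j.
Proof. by move=> hj; rewrite /musf stage_eq // addKn. Qed.

Lemma musf_C k : C (musf k).
Proof. by rewrite /musf; case: (vD (stage k)). Qed.

Lemma sum_block n : \sum_(j < Lb n) vv n j = 1.
Proof.
rewrite /Lb big_ord_recr /= {2}/vv ltnn addr0.
case: (vD n) => _ [_ <-]; apply: eq_bigr => j _; by rewrite /vv ltn_ord.
Qed.

Lemma psum_B N : \sum_(k < B N) wf k = \sum_(n < N) W n.
Proof.
elim: N => [|N ih]; first by rewrite !big_ord0.
rewrite big_ord_recr /= -ih big_split_ord /=; congr (_ + _).
rewrite -[RHS]mulr1 -(sum_block N) mulr_sumr; apply: eq_bigr => j _.
exact: wf_block.
Qed.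

Lemma Wsum N : \sum_(n < N) W n = 1 - 1 / (N + 1)%:R.
Proof.
elim: N => [|N ih]; first by rewrite big_ord0 add0n divr1 subrr.
rewrite big_ord_recr /= ih /W.
have h1 : ((N + 1)%:R : R) = N%:R + 1 by rewrite natrD.
have h2 : ((N + 2)%:R : R) = N%:R + 2 by rewrite natrD.
have h3 : ((N.+1 + 1)%:R : R) = N%:R + 2 by rewrite addn1 -addn2 natrD.
rewrite h1 h2 h3; have := ler0n R N => hN; field.
by apply/andP; split; apply/lt0r_neq0; lra.
Qed.

Lemma psum_le1 K : \sum_(k < K) wf k <= 1.
Proof.
apply: (@le_trans _ _ (\sum_(k < B K) wf k)).
  rewrite (big_ord_widen _ _ (B_ge K)); apply: sum_le_sub => // i _; exact: wf_ge0.
rewrite psum_B Wsum; rewrite lerBlDr lerDl; apply: divr_ge0 => //.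
Qed.


Definition wnng k : {nonneg R} := NngNum (wf_ge0 k).
Definition mcomp k := mscale (wnng k) (musf k).
Definition nu0 := mseries mcomp 0.
Definition ssum : \bar R := (\sum_(0 <= k <oo) (wf k)%:E)%E.

Lemma nu0E A : nu0 A = (\sum_(0 <= k <oo) (wf k)%:E * musf k A)%E.
Proof. by []. Qed.

Lemma nu0T : nu0 setT = ssum.
Proof.
rewrite nu0E; apply: eq_eseriesr => k _.
by rewrite probability_setT mule1.
Qed.

Lemma ssum_le1 : (ssum <= 1)%E.
Proof.
apply: nneseries_ub => [i|K]; first by rewrite lee_fin wf_ge0.
by rewrite sumEFin big_mkord lee_fin psum_le1.
Qed.

Lemma ssum_ge : ((1/2)%:E <= ssum)%E.
Proof.
apply: le_trans (nneseries_lim_ge (B 1) _); last by move=> i _ _; rewrite lee_fin wf_ge0.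
rewrite sumEFin big_mkord lee_fin psum_B big_ord1 /W /=.
by rewrite (_ : (0 + 1)%:R * (0 + 2)%:R = 2 :> R) // add0n mul1r.
Qed.

Definition fs := fine ssum.

Lemma ssumE : ssum = fs%:E.
Proof.
rewrite /fs fineK // ge0_fin_numE; last by apply: le_trans ssum_ge; rewrite lee_fin.
by apply: le_lt_trans ssum_le1 _; exact: ltey.
Qed.

Lemma fs_gt0 : 0 < fs.
Proof. by have := ssum_ge; rewrite ssumE lee_fin => h; apply: lt_le_trans h; lra. Qed.

Lemma fs_le1 : fs <= 1.
Proof. by have := ssum_le1; rewrite ssumE lee_fin. Qed.

Variable mu0 : P.

Definition nu : P := mnormalize nu0 mu0.

Lemma nuE A : nu A = (\sum_(0 <= k <oo) (wf k / fs)%:E * musf k A)%E.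
Proof.
have nT : (nu0 : {measure set T -> \bar R}) setT = ssum := nu0T.
have nA : forall U, (nu0 : {measure set T -> \bar R}) U = nu0 U by [].
rewrite /nu /= /mnormalize nT ssumE.
have -> : ((fs%:E == 0)%E || (fs%:E == +oo)%E) = false.
  by rewrite eqe gt_eqF ?fs_gt0.
rewrite /= nA nu0E muleC -nneseriesZl; last by move=> i _; rewrite mule_ge0 // lee_fin wf_ge0.
by apply: eq_eseriesr => k _; rewrite muleA -EFinM mulrC.
Qed.


Lemma wf_le_fs k : wf k <= fs.
Proof.
rewrite -lee_fin -ssumE.
apply: le_trans (nneseries_lim_ge k.+1 _); last by move=> i _ _; rewrite lee_fin wf_ge0.
rewrite sumEFin big_mkord lee_fin big_ord_recr /=.
by apply: ler_wpDl => //; apply: sumr_ge0 => i _; exact: wf_ge0.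
Qed.

Lemma w'_ge0 k : 0 <= wf k / fs.
Proof. by apply: divr_ge0; [exact: wf_ge0 | exact: ltW fs_gt0]. Qed.

Lemma w'_le1 k : wf k / fs <= 1.
Proof. by rewrite ler_pdivrMr ?fs_gt0 // mul1r wf_le_fs. Qed.

Lemma nu_lower n x : W n * vec n (D n) x <= cylp R X x0 nu n x.
Proof.
rewrite -lee_fin -cylpE nuE.
apply: le_trans (nneseries_lim_ge (B n.+1) _); last first.
  by move=> i _ _; rewrite mule_ge0 // lee_fin w'_ge0.
under eq_bigr => i _ do rewrite cylpE -EFinM.
rewrite sumEFin big_mkord lee_fin [B n.+1]/= big_split_ord /=.
apply: ler_wpDl.
  by apply: sumr_ge0 => i _; apply: mulr_ge0; [exact: w'_ge0 | exact: cylp_ge0].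
under eq_bigr => j _ do rewrite wf_block ?musf_block ?ltn_ord //.
apply: (@le_trans _ _ (\sum_(j < Lb n) W n * vv n j * cylp R X x0 (mm (D n) j) n x)).
  rewrite /Lb big_ord_recr /= {2}/vv ltnn mulr0 mul0r addr0 /vec mulr_sumr.
  by rewrite le_eqVlt; apply/orP; left; apply/eqP/eq_bigr => j _; rewrite /vv ltn_ord mulrA.
apply: ler_sum => j _; apply: ler_wpM2r; first exact: cylp_ge0.
have a0 : 0 <= W n * vv n j by rewrite mulr_ge0 // ?vv_ge0 // ltW // W_gt0.
rewrite ler_pdivlMr ?fs_gt0 //.
by rewrite -[leRHS]mulr1 ler_wpM2l // fs_le1.
Qed.

End Flat.
Lemma poly_bound (n : nat) : (2 <= n)%N ->
  ((n + 1) * (n + 2) <= 2 ^ 6 * n ^ 8)%N.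
Proof.
move=> n2.
have h1 : (n ^ 2 <= n ^ 8)%N by rewrite leq_pexp2l //; lia.
have h2 : ((n + 1) * (n + 2) <= 6 * n ^ 2)%N by rewrite expnS expn1; nia.
apply: (leq_trans h2); apply: leq_mul => //.
Qed.

Theorem theorem1 (R : realType) :
  exists c : R, 0 <= c /\
  forall (X : finType) (x0 : X)
         (C : set (probability (Xinf X x0) R)) (rho : probability (Xinf X x0) R),
    C !=set0 ->
    exists (w : nat -> R) (mus : nat -> probability (Xinf X x0) R)
           (nu : probability (Xinf X x0) R),
      (forall k, C (mus k)) /\
      (forall k, 0 <= w k <= 1) /\
      (forall A : set (Xinf X x0), measurable A ->
         nu A = (\sum_(0 <= k <oo) ((w k)%:E * mus k A))%E) /\
      (forall mu, C mu -> forall n : nat, (2 <= n)%N ->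
         (Ln R X x0 mu nu n <= Ln R X x0 mu rho n +
            (8 * log2 R (n%:R : R)
             + c * (log2 R (#|X|%:R : R) + 1) * log2 R (log2 R (n%:R : R))
             + c)%:E)%E).
Proof.
exists 10; split; first lra.
move=> X x0 C rho [mu0 Cmu0].
have [D hD] := boolp.choice (fun n => @stage_main R X x0 C rho mu0 Cmu0 n).
have vD : forall n, valid C (D n) by move=> n; exact: (hD n).1.
exists (fun k => wf R X x0 D k / fs R X x0 D), (musf R X x0 D), (nu R X x0 C D vD mu0).
split; first exact: (musf_C R X x0 C D vD).
split; first by move=> k; rewrite (w'_ge0 R X x0 C D vD) (w'_le1 R X x0 C D vD).
split; first by move=> A _; exact: (nuE R X x0 C D vD).
move=> mu Cmu n n2.
have [hpos hsum] := (hD n).2 mu Cmu.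
set p := vec n (D n).
set nuu := nu R X x0 C D vD mu0.
have low : forall x, W R n * p x <= cylp R X x0 nuu n x by move=> x; exact: (nu_lower R X x0 C D vD).
have ln2p : 0 < ln (2 : R) by apply: ln_gt0; lra.
have ln2h := @ln2_ge R.
case: (pselect (exists x, 0 < cylp R X x0 mu n x /\ cylp R X x0 rho n x = 0)).
  case=> x [hm hr].
  have -> : Ln R X x0 mu rho n = +oo%E.
    apply/esum_eqyP.
      by move=> y _; rewrite /kl_term; case: ifP => // _; case: ifP.
    exists x; split => //.
    by rewrite /kl_term gt_eqF // hr eqxx.
  by rewrite addye // leey.
move=> hno.
have rpos : forall x, 0 < cylp R X x0 mu n x -> 0 < cylp R X x0 rho n x.
  move=> x hm; rewrite lt0r cylp_ge0 andbT; apply/negP => /eqP hr.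
  by apply: hno; exists x.
have W0 := W_gt0 R n.
have n0 : (0 : R) < n%:R by rewrite ltr0n; lia.
have WE : 1 / W R n = (n + 1)%:R * (n + 2)%:R by rewrite /W !div1r invrK.
have a1 : (1 : R) <= (n + 1)%:R * (n + 2)%:R.
  by rewrite -natrM ler1n muln_gt0 !addn_gt0 orbT.
pose lW := ln (1 / W R n).
have lW0 : 0 <= lW by rewrite /lW WE; exact: ln_ge0.
have lWb : lW <= 6 * ln 2 + 8 * ln (n%:R : R).
  rewrite /lW WE.
  have hb : ((n + 1)%:R * (n + 2)%:R : R) <= 2 ^+ 6 * (n%:R) ^+ 8.
    rewrite -natrM (_ : (2 : R) ^+ 6 = (2 ^ 6)%N%:R); last by rewrite natrX.
    by rewrite -natrX -natrM ler_nat poly_bound.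
  have hb' := hb.
  rewrite -ler_ln ?posrE ?(lt_le_trans ltr01 a1) // in hb'; last first.
    by apply: mulr_gt0; apply: exprn_gt0 => //; lra.
  have e : ln (2 ^+ 6 * (n%:R : R) ^+ 8) = 6 * ln 2 + 8 * ln (n%:R : R).
    rewrite lnM ?posrE ?exprn_gt0 // ?lnXn //; last lra.
  by rewrite -e.
pose Q x := (0 < cylp R X x0 mu n x) && (0 < cylp R X x0 rho n x).
pose g x := if Q x then cylp R X x0 mu n x *
   (ln (cylp R X x0 rho n x / p x) + lW) / ln 2 else 0.
have term : forall x, (kl_term R (cylp R X x0 mu n x) (cylp R X x0 nuu n x) <=
    kl_term R (cylp R X x0 mu n x) (cylp R X x0 rho n x) + (g x)%:E)%E.
  move=> x; rewrite /kl_term /g /Q.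
  case: (eqVneq (cylp R X x0 mu n x) 0) => [m0|mpos].
    by rewrite m0 ltxx /= add0e.
  have hm : 0 < cylp R X x0 mu n x by rewrite lt0r mpos cylp_ge0.
  have hr := rpos x hm.
  have hp := hpos x hm hr.
  have hnu : 0 < cylp R X x0 nuu n x := lt_le_trans (mulr_gt0 W0 hp) (low x).
  rewrite (gt_eqF hr) (gt_eqF hnu) hm hr /= -EFinD lee_fin /log2.
  set m := cylp R X x0 mu n x; set r := cylp R X x0 rho n x.
  set v := cylp R X x0 nuu n x; set q := p x.
  have h : ln (m / v) <= ln (m / r) + (ln (r / q) + lW).
    rewrite /lW -!lnM ?posrE ?divr_gt0 ?mulr_gt0 ?invr_gt0 ?divr_gt0 //.
    rewrite ler_ln ?posrE ?divr_gt0 ?mulr_gt0 ?invr_gt0 ?divr_gt0 //.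
    rewrite (_ : m / r * (r / q * (1 / W R n)) = m / (W R n * q)); last first.
      by field; rewrite !lt0r_neq0.
    rewrite ler_pM2l // lef_pV2 ?posrE ?mulr_gt0 //.
    exact: low.
  have i0 : 0 < (ln (2 : R))^-1 by rewrite invr_gt0.
  have mi : 0 < m * (ln (2 : R))^-1 by rewrite mulr_gt0.
  move: h; set L1 := ln (m / v); set L2 := ln (m / r); set A := _ + lW => h.
  nra.
rewrite /Ln.
have H : (\sum_(x : n.-tuple X) kl_term R (cylp R X x0 mu n x) (cylp R X x0 nuu n x) <=
  \sum_(x : n.-tuple X) (kl_term R (cylp R X x0 mu n x) (cylp R X x0 rho n x) + (g x)%:E))%E.
  by apply: lee_sum => x _; exact: term.
apply: (le_trans H).
rewrite big_split /= sumEFin; apply: leeD2l; rewrite lee_fin.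
rewrite /g -big_mkcond /=.
have SQ : \sum_(i | Q i) cylp R X x0 mu n i <= 1.
  apply: le_trans (cylp_sum mu n); apply: sum_le_sub => // i _; exact: cylp_ge0.
rewrite -mulr_suml.
under eq_bigr do rewrite mulrDr.
rewrite big_split /= -mulr_suml.
set S1 := \sum_(i | Q i) _ * ln _.
set S2 := \sum_(i | Q i) cylp R X x0 mu n i.
have hs : S1 <= 2 := hsum.
have hS2 : 0 <= S2 by apply: sumr_ge0 => i _; exact: cylp_ge0.
have S2l : S2 * lW <= lW by rewrite -[leRHS]mul1r; apply: ler_wpM2r.
have n2R : (2 : R) <= n%:R by rewrite ler_nat.
have lnn : ln (2 : R) <= ln (n%:R : R) by rewrite ler_ln ?posrE //; lra.
have ll : 0 <= log2 R (log2 R n%:R).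
  rewrite /log2; apply: divr_ge0; last exact: ltW.
  by apply: ln_ge0; rewrite ler_pdivlMr // mul1r.
have lX : 0 <= log2 R #|X|%:R.
  rewrite /log2; apply: divr_ge0; last exact: ltW.
  apply: ln_ge0; rewrite ler1n; apply/card_gt0P; by exists x0.
have third : 0 <= 10 * (log2 R #|X|%:R + 1) * log2 R (log2 R n%:R).
  by apply: mulr_ge0 => //; apply: mulr_ge0; lra.
suff : (S1 + S2 * lW) / ln 2 <= 8 * log2 R n%:R + 10 by lra.
rewrite /log2 (_ : 8 * (ln (n%:R : R) / ln 2) + 10 = (8 * ln (n%:R : R) + 10 * ln 2) / ln 2); last first.
  by field; rewrite lt0r_neq0.
rewrite ler_pM2r ?invr_gt0 //.
lra.
Qed.
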